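(* Let $T$ be a triangulation of an unpunctured bordered surface $(S,M)$, let $\Sigma_{Q_{\overline T}}=(\{x_1,\dots,x_n\},\{F_1,\dots,F_n\})$ be its associated LP seed, and let $i\in\{1,\dots,n\}$. Then $\hat F_i=F_i$ if and only if $F_i\neq F_j$ for every $j\neq i$.
   Context: $(S,M)$: compact surface (possibly non-orientable) with nonempty boundary, marked points $M\subset\partial S$ meeting every boundary component, no punctures, not a monogon/digon/triangle; boundary segments carry variables generating the coefficient ring $R$. Quasi-arcs: arcs (up to isotopy) not bounding a Möbius strip with one marked point, and one-sided simple closed curves; compatible = disjoint, or the unique arc and one-sided curve in a Möbius strip with one marked point. Triangulation: maximal compatible set containing no one-sided curve; $x_1,\dots,x_n$ correspond to its arcs. Double cover and quiver: replace each cross-cap by a cylinder to get $\tilde S$, glue two copies along the new cylinder boundaries by the antipodal map (two oppositely oriented copies if $S$ orientable); $T$ lifts to $\overline T$, each arc/boundary segment $i$ having lifts $i,\tilde i$. $Q_{\overline T}$: vertices arcs and boundary segments of $\overline T$; arrow $i\to j$ for each triangle in which $j$ follows $i$ in the orientation; 2-cycles cancelled; $b_{ij}$ = (arrows $i\to j$) $-$ (arrows $j\to i$). $F_j=\prod_{b_{ij}+b_{\tilde ij}>0}x_i^{b_{ij}+b_{\tilde ij}}+\prod_{b_{ij}+b_{\tilde ij}<0}x_i^{-(b_{ij}+b_{\tilde ij})}$ over twin-pair representatives $i$. Normalisation (Lam–Pylyavskyy): $\hat F_j=F_j/\prod_{k\neq j}x_k^{a_k}$ where $a_k\ge0$ is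 maximal such that $F_k^{a_k}$ divides $F_j|_{x_k\leftarrow F_k/x}$ in $R[x_1,\dots,x_{k-1},x^{\pm1},x_{k+1},\dots,x_n]$. *)

(* Defs.v *)
From HB Require Import structures.
From mathcomp Require Import all_boot all_order all_algebra.
From mathcomp Require Import mpoly fraction.
From Stdlib Require Import ClassicalEpsilon.

Set Implicit Arguments.
Unset Strict Implicit.
Unset Printing Implicit Defensive.

Import GRing.Theory Num.Theory.
Local Open Scope ring_scope.
Local Open Scope quotient_scope.

(* Triangles are the elements of a finite type T; triangle t has sides      *)
(* (t,0),(t,1),(t,2) and corners (vertices) v_0,v_1,v_2; side k runs from   *)
(* v_k to v_(k+1 mod 3).  [glue s] is the side glued to s (None: s is a     *)
(* boundary segment).  [twist s] records how the two sides are glued:       *)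
(*   twist = false : side k of t from v_k to v_(k+1) is identified with     *)
(*                   side k' of t' from v_(k'+1) to v_k' (orientation-      *)
(*                   compatible gluing w.r.t. the reference cyclic orders); *)
(*   twist = true  : v_k ~ v_k' and v_(k+1) ~ v_(k'+1) (orientation         *)
(*                   reversing gluing).                                     *)

Definition side (T : finType) := (T * 'I_3)%type.

Record gluing (T : finType) := Gluing {
  glue : side T -> option (side T);
  twist : side T -> bool }.

Definition nxt (k : 'I_3) : 'I_3 := inord (k.+1 %% 3).

Section Surface.
Variables (T : finType) (G : gluing T).

Definition glued (s s' : side T) : bool := glue G s == Some s'.

Definition corner_match (s s' c c' : side T) : bool :=
  let: (t, k) := s in let: (t', k') := s' in
  if twist G s then
    ((c == (t, k)) && (c' == (t', k'))) || ((c == (t, nxt k)) && (c' == (t', nxt k')))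
  else
    ((c == (t, k)) && (c' == (t', nxt k'))) || ((c == (t, nxt k)) && (c' == (t', k'))).

(* corners are identified to the vertex v_k of triangle t, coded as (t,k) *)
Definition corner_adj : rel (side T) :=
  fun c c' => [exists s : side T, exists s' : side T, glued s s' && corner_match s s' c c'].

Definition bdry_corner (c : side T) : bool :=
  [exists s : side T, (glue G s == None) && ((c == s) || (c == (s.1, nxt s.2)))].

Definition tri_adj : rel T :=
  fun t t' => [exists k : 'I_3, exists k' : 'I_3, glued (t, k) (t', k')].

(* [G] is a triangulation (in the sense of the paper: maximal collection of *)
(* compatible quasi-arcs, no one-sided curves) of a connected compact       *)
(* surface with nonempty boundary, all marked points on the boundary (no    *)
(* punctures).                                                              *)
Definition is_triangulation : Prop :=
  [/\
      (forall s s', glue G s = Some s' ->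
          [/\ glue G s' = Some s, s' <> s & twist G s' = twist G s]),
      (* two sides of one triangle glued together: the third side is a
         boundary segment (otherwise the third side would be an arc bounding
         a Moebius strip with one marked point, which is not a quasi-arc) *)
      (forall t k k' l, glue G (t, k) = Some (t, k') -> l != k -> l != k' ->
          glue G (t, l) = None),
      (* no punctures: every vertex lies on the boundary *)
      (forall c : side T, exists c', connect corner_adj c c' && bdry_corner c'),
      (forall t t' : T, connect tri_adj t t')
    & (* not a triangle (the only triangulable excluded case) *)
      (exists s, glue G s <> None)].

(* Edges of the triangulation: a side represents its edge when it is the   *)
(* glued partner with smaller rank (or it is a boundary segment).           *)
Definition erep (s : side T) : side T :=
  match glue G s with
  | Some s' => if (enum_rank s' < enum_rank s)%N then s' else s
  | None => s
  end.

Definition is_edge (s : side T) : bool := erep s == s.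
Definition is_arc (s : side T) : bool := is_edge s && (glue G s != None).

(* sides of the cover: (s, sigma); triangle (t,true) carries the cyclic      *)
(* order 0 -> 1 -> 2, triangle (t,false) the opposite one.                  *)
Definition cglued (c d : side T * bool) : bool :=
  (glue G c.1 == Some d.1) && (d.2 == c.2 (+) twist G c.1).

Definition csame (c d : side T * bool) : bool := (c == d) || cglued c d.

Definition cnext (sg : bool) (k : 'I_3) : 'I_3 := if sg then nxt k else nxt (nxt k).

(* b_{cd} for edges c, d of the cover: arrows c -> d minus arrows d -> c   *)
(* (an arrow i -> j for each triangle in which j follows i).               *)
Definition bcov (c d : side T * bool) : int :=
  \sum_(t : T) \sum_(sg : bool) \sum_(k : 'I_3)
    ((nat_of_bool (csame ((t, k), sg) c && csame ((t, cnext sg k), sg) d))%:Z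
   - (nat_of_bool (csame ((t, k), sg) d && csame ((t, cnext sg k), sg) c))%:Z).

(* b_{ij} + b_{\tilde i j}: i an edge of S, j an arc of S (lift (j,true)) *)
Definition bsum (i j : side T) : int := bcov (i, true) (j, true) + bcov (i, false) (j, true).

(* ---- polynomials: variables x_s indexed by sides; the variable of an    *)
(* edge is x_(erep s).  Coefficients in Z (R = Z[boundary variables]).     *)
Definition nv := #|{: side T}|.
Definition xv (s : side T) : {mpoly int[nv]} := 'X_(enum_rank s).

Definition Fpol (j : side T) : {mpoly int[nv]} :=
  \prod_(i : side T | is_edge i) xv i ^+ (if (0 < bsum i j)%R then `|bsum i j|%N else 0%N)
+ \prod_(i : side T | is_edge i) xv i ^+ (if (bsum i j < 0)%R then `|bsum i j|%N else 0%N).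

Definition frac := {fraction {mpoly int[nv]}}.
Definition tofr (p : {mpoly int[nv]}) : frac := @FracField.tofrac _ p.

(* F_j with x_k replaced by F_k / x, the new variable x reusing slot k *)
Definition subst_exch (k : side T) (P : {mpoly int[nv]}) : frac :=
  mmap (fun c : int => c%:~R : frac)
       (fun l : 'I_nv => if l == enum_rank k then (tofr (Fpol k)) / (tofr (xv k))
                         else (tofr ('X_l : {mpoly int[nv]}))) P.

(* F_k^a divides F_j|_{x_k <- F_k/x} in the Laurent ring
   R[x_1..x_{k-1}, x^{+-1}, x_{k+1}..x_n] (elements of which are H / x^N) *)
Definition lp_divides (a : nat) (k j : side T) : Prop :=
  exists (N : nat) (H : {mpoly int[nv]}),
    subst_exch k (Fpol j) = (tofr (Fpol k ^+ a * H)) / (tofr (xv k ^+ N)).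

Definition lp_exp (k j : side T) : nat :=
  epsilon (inhabits 0%N)
    (fun a => lp_divides a k j /\ forall b, lp_divides b k j -> (b <= a)%N).

Definition hatF (j : side T) : frac :=
  (tofr (Fpol j)) / tofr (\prod_(k : side T | is_arc k && (k != j)) xv k ^+ lp_exp k j).

End Surface.

(* Main.v *)
Require Import Defs.
From HB Require Import structures.
From mathcomp Require Import all_boot all_order all_algebra.
From mathcomp Require Import mpoly fraction.
From mathcomp Require Import ring zify.
From Stdlib Require Import ClassicalEpsilon.
Set Implicit Arguments. Unset Strict Implicit. Unset Printing Implicit Defensive.
Import Order.TTheory GRing.Theory Num.Theory.
Local Open Scope ring_scope.

Section S.
Variables (T : finType) (G : gluing T).
Local Notation nv := (nv T).

Definition posp (z : int) : nat := if (0 < z)%R then `|z|%N else 0%N.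
Definition negp (z : int) : nat := if (z < 0)%R then `|z|%N else 0%N.

Lemma FpolE j : Fpol G j = \prod_(l : side T | is_edge G l) xv l ^+ posp (bsum G l j)
   + \prod_(l : side T | is_edge G l) xv l ^+ negp (bsum G l j).
Proof. by []. Qed.

Definition ev (S : comNzRingType) (h : side T -> S) (p : {mpoly int[nv]}) : S :=
  mmap intr (fun l : 'I_nv => h (enum_val l)) p.

Lemma ev_rmorph (S : comNzRingType) (h : side T -> S) : multiplicative (ev h).
Proof. exact: mmap_is_multiplicative. Qed.

Lemma evM (S : comNzRingType) (h : side T -> S) p q : ev h (p * q) = ev h p * ev h q.
Proof. by rewrite /ev rmorphM. Qed.
Lemma evX (S : comNzRingType) (h : side T -> S) l : ev h (xv l) = h l.
Proof. by rewrite /ev /xv mmapX mmap1U enum_rankK. Qed.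

Lemma tofrD (p q : {mpoly int[nv]}) : tofr (p + q) = tofr p + tofr q :> Defs.frac T.
Proof. exact: tofracD. Qed.
Lemma tofrM (p q : {mpoly int[nv]}) : tofr (p * q) = tofr p * tofr q :> Defs.frac T.
Proof. exact: tofracM. Qed.
Lemma tofrX (p : {mpoly int[nv]}) e : tofr (p ^+ e) = tofr p ^+ e :> Defs.frac T.
Proof. exact: tofracXn. Qed.
Lemma tofr1 : @tofr T 1 = 1 :> Defs.frac T.
Proof. exact: tofrac1. Qed.
Lemma tofr_prod (P : pred (side T)) (F : side T -> {mpoly int[nv]}) :
  tofr (\prod_(l | P l) F l) = \prod_(l | P l) tofr (F l).
Proof. exact: (rmorph_prod (@FracField.tofrac _)). Qed.
Lemma tofr_inj (p q : {mpoly int[nv]}) : tofr p = tofr q -> p = q.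
Proof. by move/eqP; rewrite /tofr tofrac_eq => /eqP. Qed.

Lemma tofr_neq0 (p : {mpoly int[nv]}) : p != 0 -> tofr p != 0.
Proof. by rewrite /tofr tofrac_eq0. Qed.

Lemma xv_neq0 l : xv l != 0 :> {mpoly int[nv]}.
Proof.
apply/eqP => /(congr1 (mcoeff (U_(enum_rank l))%MM)).
by rewrite /xv mcoeffX eqxx mcoeff0.
Qed.

Lemma absz_pn z : `|z|%N = (posp z + negp z)%N.
Proof.
rewrite /posp /negp; have [z0|z0|->] := ltrgtP z 0 => //=.
by rewrite addn0.
Qed.

Lemma mmap_xv (S : comNzRingType) (h : 'I_nv -> S) l : mmap intr h (xv l) = h (enum_rank l).
Proof. rewrite /xv mmapX; exact: mmap1U. Qed.

Lemma aux1 (F : fieldType) (A P Yp Yn : F) : Yp != 0 -> Yn != 0 ->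
  P * (A * Yn) / (Yp * Yn) = A / Yp * P.
Proof. by move=> h1 h2; field; rewrite h1 h2. Qed.
Lemma aux2 (F : fieldType) (A P Yp Yn : F) : Yp != 0 -> Yn != 0 ->
  P * (A * Yp) / (Yp * Yn) = A / Yn * P.
Proof. by move=> h1 h2; field; rewrite h1 h2. Qed.

Definition Num (k j : side T) : {mpoly int[nv]} :=
  \prod_(l : side T | is_edge G l && (l != k)) xv l ^+ posp (bsum G l j)
    * (Fpol G k ^+ posp (bsum G k j) * xv k ^+ negp (bsum G k j))
+ \prod_(l : side T | is_edge G l && (l != k)) xv l ^+ negp (bsum G l j)
    * (Fpol G k ^+ negp (bsum G k j) * xv k ^+ posp (bsum G k j)).

Lemma subst_formula k j : is_edge G k ->
  subst_exch G k (Fpol G j) = tofr (Num k j) / tofr (xv k ^+ `|bsum G k j|).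
Proof.
move=> Ek.
set phi := (fun l : 'I_nv => if l == enum_rank k then tofr (Fpol G k) / tofr (xv k)
                         else tofr ('X_l : {mpoly int[nv]})).
have -> : subst_exch G k (Fpol G j) = mmap intr phi (Fpol G j) by [].
have mX l e : mmap intr phi (xv l ^+ e) =
   if l == k then (tofr (Fpol G k) / tofr (xv k)) ^+ e else tofr (xv l) ^+ e.
  rewrite rmorphXn /= mmap_xv /phi (inj_eq enum_rank_inj).
  by case: eqP => // ->.
have yn0 : tofr (xv k) != 0 by apply: tofr_neq0; apply: xv_neq0.
rewrite [Fpol G j]FpolE rmorphD !rmorph_prod /Num !(bigD1 k Ek) /= !mX eqxx.
have eP (e : side T -> nat) :
   \prod_(i | is_edge G i && (i != k)) mmap intr phi (xv i ^+ e i) =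
   \prod_(i | is_edge G i && (i != k)) tofr (xv i) ^+ e i.
  by apply: eq_bigr => i /andP[_ ik]; rewrite mX (negbTE ik).
rewrite (eP (fun i => posp (bsum G i j))) (eP (fun i => negp (bsum G i j))).
move: (Fpol G k) => F.
rewrite tofrD !tofrM !tofrX !tofr_prod absz_pn exprD.
set a := tofr F; set y := tofr (xv k).
have tP e : \prod_(l | is_edge G l && (l != k)) tofr (xv l ^+ e l) =
            \prod_(l | is_edge G l && (l != k)) tofr (xv l) ^+ e l.
  by apply: eq_bigr => l _; exact: tofrX.
rewrite (tP (fun l => posp (bsum G l j))) (tP (fun l => negp (bsum G l j))).
set P1 := \prod_(_ | _) _; set P2 := \prod_(_ | _) _.
rewrite !expr_div_n.
have yp := expf_neq0 (posp (bsum G k j)) yn0.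
have yn := expf_neq0 (negp (bsum G k j)) yn0.
rewrite [RHS]mulrDl (aux1 _ _ yp yn) (aux2 _ _ yp yn) //.
Qed.

Section Ev.
Variable (S : comNzRingType) (h : side T -> S).
Lemma evD p q : ev h (p + q) = ev h p + ev h q.
Proof. by rewrite /ev rmorphD. Qed.
Lemma evXn p e : ev h (p ^+ e) = ev h p ^+ e.
Proof. by rewrite /ev rmorphXn. Qed.
Lemma ev_prod (P : pred (side T)) (F : side T -> {mpoly int[nv]}) :
  ev h (\prod_(l | P l) F l) = \prod_(l | P l) ev h (F l).
Proof. by rewrite /ev rmorph_prod. Qed.
Lemma ev1 : ev h 1 = 1.
Proof. by rewrite /ev rmorph1. Qed.

Lemma evF j : ev h (Fpol G j) =
  \prod_(l | is_edge G l) h l ^+ posp (bsum G l j) +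
  \prod_(l | is_edge G l) h l ^+ negp (bsum G l j).
Proof.
rewrite [Fpol G j]FpolE evD !ev_prod.
by congr (_ + _); apply: eq_bigr => l _; rewrite evXn evX.
Qed.
End Ev.

Lemma cross (F : fieldType) (A B C D : F) : B != 0 -> D != 0 -> A / B = C / D -> A * D = C * B.
Proof. by move=> hB hD e; rewrite -(divfK hB A) e; field; rewrite hD. Qed.

Lemma lp_div_poly a k j : is_edge G k -> lp_divides G a k j ->
  exists N H, Num k j * xv k ^+ N = Fpol G k ^+ a * H * xv k ^+ `|bsum G k j|.
Proof.
move=> Ek [N [H e]]; exists N, H; apply: tofr_inj.
rewrite subst_formula // in e.
rewrite tofrM [RHS]tofrM; apply: cross e; apply: tofr_neq0; exact: expf_neq0 (xv_neq0 k).
Qed.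

Lemma evNum (S : comNzRingType) (h : side T -> S) k j : ev h (Num k j) =
  \prod_(l | is_edge G l && (l != k)) h l ^+ posp (bsum G l j)
    * (ev h (Fpol G k) ^+ posp (bsum G k j) * h k ^+ negp (bsum G k j))
+ \prod_(l | is_edge G l && (l != k)) h l ^+ negp (bsum G l j)
    * (ev h (Fpol G k) ^+ negp (bsum G k j) * h k ^+ posp (bsum G k j)).
Proof.
rewrite /Num evD !evM !ev_prod !evXn !evX.
by congr (_ * _ + _ * _); apply: eq_bigr => l _; rewrite evXn evX.
Qed.

Lemma key a k j (S : idomainType) (h : side T -> S) : is_edge G k ->
  lp_divides G a k j -> (0 < a)%N -> h k != 0 -> ev h (Fpol G k) = 0 ->
  ev h (Num k j) = 0.
Proof.
move=> Ek /(lp_div_poly Ek) [N [H /(congr1 (ev h))]].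
rewrite !evM !evXn evX => e a0 hk0 F0.
move: e; rewrite F0 expr0n eqn0Ngt a0 /= !mul0r => /eqP.
by rewrite mulf_eq0 expf_eq0 (negbTE hk0) andbF orbF => /eqP.
Qed.

Lemma pn_neg z : z < 0 -> posp z = 0%N /\ negp z = `|z|%N.
Proof. by move=> z0; rewrite /posp /negp z0 ltNge (ltW z0). Qed.
Lemma pn_pos z : 0 < z -> posp z = `|z|%N /\ negp z = 0%N.
Proof. by move=> z0; rewrite /posp /negp z0 ltNge (ltW z0). Qed.
Lemma pn_0 : posp 0 = 0%N /\ negp 0 = 0%N.
Proof. by []. Qed.

Lemma key_c a k j (S : idomainType) (h : side T -> S) : is_edge G k ->
  lp_divides G a k j -> (0 < a)%N -> (forall l, h l != 0) -> ev h (Fpol G k) = 0 ->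
  bsum G k j = 0.
Proof.
move=> Ek ld a0 hn F0; have := key Ek ld a0 (hn k) F0.
rewrite evNum F0.
have pn (P : pred (side T)) (e : side T -> nat) : \prod_(l | P l) h l ^+ e l != 0.
  by rewrite prodf_seq_neq0; apply/allP => l _; apply/implyP => _; rewrite expf_neq0.
have [z0|z0|//] := ltrgtP (bsum G k j) 0.
  have [-> ->] := pn_neg z0; rewrite expr0 expr0n absz_eq0 (negbTE (ltr0_neq0 z0)) /=.
  rewrite mul0r mulr0 addr0 mul1r => /eqP; rewrite mulf_eq0 (negbTE (pn _ _)) /=.
  by rewrite expf_eq0 (negbTE (hn k)) andbF.
have [-> ->] := pn_pos z0; rewrite expr0 expr0n absz_eq0 (negbTE (lt0r_neq0 z0)) /=.
rewrite mul0r mulr0 add0r mul1r => /eqP; rewrite mulf_eq0 (negbTE (pn _ _)) /=.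
by rewrite expf_eq0 (negbTE (hn k)) andbF.
Qed.

Lemma key_F a k j (S : idomainType) (h : side T -> S) : is_edge G k ->
  lp_divides G a k j -> (0 < a)%N -> h k != 0 -> ev h (Fpol G k) = 0 ->
  bsum G k j = 0 -> ev h (Fpol G j) = 0.
Proof.
move=> Ek ld a0 hk F0 z0; have := key Ek ld a0 hk F0.
rewrite evNum F0 evF !(bigD1 k Ek) /= z0 /=.
by rewrite !expr0 !mulr1 !mul1r.
Qed.
End S.

Lemma nxtE k : nat_of_ord (nxt k) = (k.+1 %% 3)%N.
Proof. by rewrite /nxt inordK // ltn_pmod. Qed.
Lemma nxt_inj : injective nxt.
Proof.
move=> a b /(congr1 val); rewrite /= !nxtE => h; apply/val_inj => /=.
move: (ltn_ord a) (ltn_ord b) h; lia.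
Qed.
Lemma nxt_neq k : nxt k != k.
Proof. apply/eqP => /(congr1 val); rewrite /= nxtE; move: (ltn_ord k); lia. Qed.
Lemma nxt2_neq k : nxt (nxt k) != k.
Proof. apply/eqP => /(congr1 val); rewrite /= !nxtE; move: (ltn_ord k); lia. Qed.
Lemma cnext_inj sg : injective (cnext sg).
Proof. by case: sg => /= a b; [exact: nxt_inj | move/nxt_inj/nxt_inj]. Qed.
Lemma cnext_neq sg k : cnext sg k != k.
Proof. by case: sg; [exact: nxt_neq | exact: nxt2_neq]. Qed.

Section Comb.
Variables (T : finType) (G : gluing T).
Hypothesis HG : is_triangulation G.

Lemma ginv s s' : glue G s = Some s' -> [/\ glue G s' = Some s, s' <> s & twist G s' = twist G s].
Proof. by case: HG => h _ _ _ _; apply: h. Qed.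

Lemma ginj a b c : glue G a = Some c -> glue G b = Some c -> a = b.
Proof. by move=> /ginv[ha _ _] /ginv[hb _ _]; move: ha; rewrite hb => -[]. Qed.

Lemma csame_side (c : side T * bool) s b : csame G c (s, b) -> c.1 = s \/ glue G c.1 = Some s.
Proof.
case/orP => [/eqP -> | ]; first by left.
by rewrite /cglued => /andP[/eqP h _]; right.
Qed.

Lemma edge_glued a b : is_edge G a -> is_edge G b -> glue G a = Some b -> False.
Proof.
move=> Ea Eb ga; have [gb ba _] := ginv ga.
move: Ea Eb; rewrite /is_edge /erep ga gb.
case: ltnP => h1; first by move/eqP/ba.
case: ltnP => h2; first by move=> _ /eqP/esym/ba.
move=> _ _; apply: ba; apply: enum_rank_inj; apply: val_inj; apply/eqP.
by rewrite eqn_leq h1 h2.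
Qed.

Lemma bcov_self c : bcov G c c = 0.
Proof. by apply: big1 => t _; apply: big1 => sg _; apply: big1 => m _; rewrite subrr. Qed.

Lemma one_tri t m m' : m != m' -> glue G (t, m) = Some (t, m') ->
  forall i, is_arc G i -> i = (t, m) \/ i = (t, m').
Proof.
move=> mm gm [ti mi] /andP[_ gi].
case: HG => _ h2 _ hc _.
have adj t'' : tri_adj G t t'' -> t'' = t.
  case/existsP => k1 /existsP[k2 /eqP g].
  have [e|k1m] := eqVneq k1 m; first by move: g; rewrite e gm => -[].
  have [e|k1m'] := eqVneq k1 m'.
    by have [g' _ _] := ginv gm; move: g; rewrite e g' => -[].
  by move: g; rewrite (h2 t m m' k1 gm k1m k1m').
have tit : ti = t.
  have /connectP[p pth ->] := hc t ti.
  elim: p t pth adj {gm mm h2 hc gi} => [|x p IH] t0 //= /andP[a pth] adj0.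
  have xt := adj0 _ a; subst x; exact: IH pth adj0.
subst ti.
have [e|mim] := eqVneq mi m; first by left; rewrite e.
have [e|mim'] := eqVneq mi m'; first by right; rewrite e.
by move: gi; rewrite (h2 t m m' mi gm mim mim').
Qed.

Lemma bsum_self k i : is_arc G k -> is_arc G i -> i != k -> bsum G k k = 0.
Proof.
move=> Ak Ai ik; rewrite /bsum bcov_self add0r.
set term := fun t sg m =>
  ((nat_of_bool (csame G ((t, m), sg) (k, false) && csame G ((t, cnext sg m), sg) (k, true)))%:Z
   - (nat_of_bool (csame G ((t, m), sg) (k, true) && csame G ((t, cnext sg m), sg) (k, false)))%:Z).
case: (boolP [exists t, exists sg, exists m, term t sg m != 0]); last first.
  move/existsPn => h; apply: big1 => t _; apply: big1 => sg _; apply: big1 => m _.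
  by move: (h t) => /existsPn /(_ sg) /existsPn /(_ m) /negPn /eqP.
case/existsP => t /existsP[sg /existsP[m tn]].
have [p q] : (csame G ((t, m), sg) (k, false) || csame G ((t, m), sg) (k, true)) /\
             (csame G ((t, cnext sg m), sg) (k, true) || csame G ((t, cnext sg m), sg) (k, false)).
  move: tn; rewrite /term.
  case: (csame G ((t, m), sg) (k, false)); case: (csame G ((t, cnext sg m), sg) (k, true));
  case: (csame G ((t, m), sg) (k, true)); case: (csame G ((t, cnext sg m), sg) (k, false)) => //.
have p' : (t, m) = k \/ glue G (t, m) = Some k.
  by case/orP: p => /csame_side.
have q' : (t, cnext sg m) = k \/ glue G (t, cnext sg m) = Some k.
  by case/orP: q => /csame_side.
have mm : m != cnext sg m by rewrite eq_sym cnext_neq.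
have [g kk] : glue G (t, m) = Some (t, cnext sg m) /\ (k = (t, m) \/ k = (t, cnext sg m)).
  case: p' q' => [e1|g1] [e2|g2].
  - by rewrite -e2 in e1; case: e1 => /eqP; rewrite (negbTE mm).
  - by rewrite e1; have [g _ _] := ginv g2; split => //; left.
  - by rewrite -e2 in g1 *; split => //; right.
  - by have := ginj g1 g2 => -[] /eqP; rewrite (negbTE mm).
have [gb _ _] := ginv g.
have [e|e] := one_tri mm g Ai; case: kk => e'; subst.
- by rewrite eqxx in ik.
- by case: (edge_glued (proj1 (andP Ai)) (proj1 (andP Ak)) g).
- by case: (edge_glued (proj1 (andP Ai)) (proj1 (andP Ak)) gb).
- by rewrite eqxx in ik.
Qed.

Lemma triple (F : side T * bool -> int) :
  \sum_(t : T) \sum_(sg : bool) \sum_(m : 'I_3) F ((t, m), sg) = \sum_(c : side T * bool) F c.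
Proof.
transitivity (\sum_(s : side T) \sum_(b : bool) F (s, b)); last first.
  by rewrite pair_bigA; apply: eq_bigr => -[].
transitivity (\sum_(t : T) \sum_(m : 'I_3) \sum_(b : bool) F ((t, m), b)); last first.
  by rewrite pair_bigA; apply: eq_bigr => -[].
by apply: eq_bigr => t _; exact: exchange_big.
Qed.

Lemma excl (c : side T * bool) l : ~~ (csame G c (l, true) && csame G c (l, false)).
Proof.
apply/negP => /andP[]; rewrite /csame /cglued.
case/orP => [/eqP e1|/andP[/eqP g1 /eqP t1]]; case/orP => [/eqP e2|/andP[/eqP g2 /eqP t2]].
- by rewrite e1 in e2.
- by subst c; have [_ h _] := ginv g2.
- by subst c; have [_ h _] := ginv g1.
- by move: t2; rewrite -t1.
Qed.

Lemma Jcount j : \sum_(c : side T * bool) (nat_of_bool (csame G c (j, true)))%:Z <= 2.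
Proof.
pose b : side T * bool := match glue G j with Some j' => (j', true (+) twist G j') | None => (j, true) end.
have le c : (nat_of_bool (csame G c (j, true)))%:Z <= (nat_of_bool (c == (j, true)))%:Z + (nat_of_bool (c == b))%:Z.
  case: (boolP (csame G c (j, true))) => //=; rewrite /csame /cglued.
  case/orP => [->|/andP[/eqP g /eqP t1]]; first by case: (c == b).
  have [gj _ tw] := ginv g.
  have cb : c = b.
    rewrite /b gj; case: c g t1 {gj tw} => s sb /= _ t1.
    by move: t1; case: sb; case: (twist G s).
  by rewrite cb eqxx; case: (b == (j, true)).
apply: le_trans (ler_sum _ (fun c _ => le c)) _.
rewrite big_split /= (bigD1 (j, true)) //= big1 => [|c /negbTE -> //].
rewrite (bigD1 b) //= big1 => [|c /negbTE -> //].
by rewrite !eqxx.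
Qed.

Lemma bsum_split l j : bsum G l j =
  \sum_(t : T) \sum_(sg : bool) \sum_(m : 'I_3)
   (((nat_of_bool (csame G ((t, m), sg) (l, true) && csame G ((t, cnext sg m), sg) (j, true)))%:Z
   - (nat_of_bool (csame G ((t, m), sg) (j, true) && csame G ((t, cnext sg m), sg) (l, true)))%:Z)
  + ((nat_of_bool (csame G ((t, m), sg) (l, false) && csame G ((t, cnext sg m), sg) (j, true)))%:Z
   - (nat_of_bool (csame G ((t, m), sg) (j, true) && csame G ((t, cnext sg m), sg) (l, false)))%:Z)).
Proof.
rewrite /bsum /bcov -big_split; apply: eq_bigr => t _.
rewrite -big_split; apply: eq_bigr => sg _; by rewrite -big_split.
Qed.

Lemma bsum_bound l j : -2 <= bsum G l j <= 2.
Proof.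
rewrite bsum_split; apply/andP; split.
  pose f (c : side T * bool) := - (nat_of_bool (csame G c (j, true)))%:Z.
  apply: (@le_trans _ _ (\sum_(t : T) \sum_(sg : bool) \sum_(m : 'I_3) f ((t, m), sg))).
    rewrite triple /f sumrN lerN2; exact: Jcount.
  apply: ler_sum => t _; apply: ler_sum => sg _; apply: ler_sum => m _.
  rewrite /f; have := excl ((t, cnext sg m), sg) l.
  case: (csame G ((t, m), sg) (j, true)); case: (csame G ((t, cnext sg m), sg) (l, true));
  case: (csame G ((t, cnext sg m), sg) (l, false)); case: (csame G ((t, m), sg) (l, true));
  case: (csame G ((t, m), sg) (l, false)); case: (csame G ((t, cnext sg m), sg) (j, true)) => //.
apply: (@le_trans _ _ (\sum_(t : T) \sum_(sg : bool) \sum_(m : 'I_3)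
   (nat_of_bool (csame G ((t, cnext sg m), sg) (j, true)))%:Z)).
  apply: ler_sum => t _; apply: ler_sum => sg _; apply: ler_sum => m _.
  have := excl ((t, m), sg) l.
  case: (csame G ((t, m), sg) (j, true)); case: (csame G ((t, cnext sg m), sg) (l, true));
  case: (csame G ((t, cnext sg m), sg) (l, false)); case: (csame G ((t, m), sg) (l, true));
  case: (csame G ((t, m), sg) (l, false)); case: (csame G ((t, cnext sg m), sg) (j, true)) => //.
have -> : \sum_(t : T) \sum_(sg : bool) \sum_(m : 'I_3)
   (nat_of_bool (csame G ((t, cnext sg m), sg) (j, true)))%:Z =
   \sum_(t : T) \sum_(sg : bool) \sum_(m : 'I_3) (nat_of_bool (csame G ((t, m), sg) (j, true)))%:Z.
  apply: eq_bigr => t _; apply: eq_bigr => sg _.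
  by rewrite [RHS](reindex_inj (@cnext_inj sg)).
rewrite (triple (fun c => (nat_of_bool (csame G c (j, true)))%:Z)); exact: Jcount.
Qed.
End Comb.

Definition FF := 'F_13.
Definition m1 (x : FF) (b : int) : FF := x ^+ posp b + x ^+ negp b.
Definition m2 (x y : FF) (bv bu : int) : FF := x ^+ posp bv * y ^+ posp bu + x ^+ negp bv * y ^+ negp bu.
Definition rng : seq int := [:: -2; -1; 0; 1; 2].
Definition vals : seq FF := [seq (i%:R : FF) | i <- [:: 2; 3; 4; 5; 9; 12]%N].
Lemma fin1b : all (fun bv => all (fun cv =>
  (bv != 0) ==> (cv != bv) ==> (cv != - bv) ==>
  has (fun x => (x != 0) && (m1 x bv == 0) && (m1 x cv != 0)) vals) rng) rng.
Proof. vm_compute. reflexivity. Qed.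
Lemma fin2b : all (fun bv => all (fun bu => all (fun cv => all (fun cu =>
  (bv != 0) ==> (bv * cu != bu * cv) ==>
  has (fun x => has (fun y => (x != 0) && (y != 0) && (m2 x y bv bu == 0) && (m2 x y cv cu != 0)) vals) vals) rng) rng) rng) rng.
Proof. vm_compute. reflexivity. Qed.

Lemma in_rng (z : int) : -2 <= z <= 2 -> z \in rng.
Proof.
move=> /andP[h1 h2]; have : z = -2 \/ z = -1 \/ z = 0 \/ z = 1 \/ z = 2 by lia.
by case=> [->|[->|[->|[->|->]]]].
Qed.

Lemma fin1 (bv cv : int) : -2 <= bv <= 2 -> -2 <= cv <= 2 -> bv != 0 -> cv != bv -> cv != - bv ->
  exists x : FF, [/\ x != 0, m1 x bv = 0 & m1 x cv != 0].
Proof.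
move=> /in_rng hb /in_rng hc h1 h2 h3.
move/allP: fin1b => /(_ _ hb) /allP /(_ _ hc); rewrite h1 h2 h3 !implyTb => /seq.hasP[x _].
by case/andP => /andP[x0 /eqP e] n; exists x.
Qed.

Lemma fin2 (bv bu cv cu : int) : -2 <= bv <= 2 -> -2 <= bu <= 2 -> -2 <= cv <= 2 -> -2 <= cu <= 2 ->
  bv != 0 -> bv * cu != bu * cv ->
  exists x y : FF, [/\ x != 0, y != 0, m2 x y bv bu = 0 & m2 x y cv cu != 0].
Proof.
move=> /in_rng hb /in_rng hbu /in_rng hc /in_rng hcu h1 h2.
move/allP: fin2b => /(_ _ hb) /allP /(_ _ hbu) /allP /(_ _ hc) /allP /(_ _ hcu).
rewrite h1 h2 !implyTb => /seq.hasP[x _] /seq.hasP[y _].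
by case/andP => /andP[/andP[x0 y0] /eqP e] n; exists x, y.
Qed.

Section Main.
Variables (T : finType) (G : gluing T).
Hypothesis HG : is_triangulation G.

Definition pt1 (S : comNzRingType) (v : side T) (x : S) : side T -> S :=
  fun l => if l == v then x else 1.
Definition pt2 (S : comNzRingType) (v u : side T) (x y : S) : side T -> S :=
  fun l => if l == v then x else if l == u then y else 1.

Lemma prod_pt1 (S : comNzRingType) v (x : S) (e : side T -> nat) : is_edge G v ->
  \prod_(l | is_edge G l) pt1 v x l ^+ e l = x ^+ e v.
Proof.
move=> Ev; rewrite (bigD1 v) //= /pt1 eqxx big1 ?mulr1 // => l /andP[_ /negbTE ->].
by rewrite expr1n.
Qed.

Lemma prod_pt2 (S : comNzRingType) v u (x y : S) (e : side T -> nat) : is_edge G v -> is_edge G u ->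
  u != v -> \prod_(l | is_edge G l) pt2 v u x y l ^+ e l = x ^+ e v * y ^+ e u.
Proof.
move=> Ev Eu uv; rewrite (bigD1 v) //= (bigD1 u) /=; last by rewrite Eu uv.
rewrite /pt2 eqxx (negbTE uv) eqxx big1 ?mulr1 ?mulrA // => l /andP[/andP[_ /negbTE ->] /negbTE ->].
by rewrite expr1n.
Qed.

Lemma evF1 v (x : FF) j : is_edge G v -> ev (pt1 v x) (Fpol G j) = m1 x (bsum G v j).
Proof. by move=> Ev; rewrite evF !prod_pt1. Qed.

Lemma evF2 v u (x y : FF) j : is_edge G v -> is_edge G u -> u != v ->
  ev (pt2 v u x y) (Fpol G j) = m2 x y (bsum G v j) (bsum G u j).
Proof. by move=> Ev Eu uv; rewrite evF !prod_pt2. Qed.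

Lemma Fpol_eq i k : (forall l, is_edge G l -> bsum G l i = bsum G l k) -> Fpol G i = Fpol G k.
Proof.
move=> h; rewrite !FpolE; congr (_ + _); apply: eq_bigr => l El; by rewrite h.
Qed.

Lemma posp_opp (z : int) : posp (- z) = negp z.
Proof. by rewrite /posp /negp oppr_gt0 abszN. Qed.
Lemma negp_opp (z : int) : negp (- z) = posp z.
Proof. by rewrite /posp /negp oppr_lt0 abszN. Qed.

Lemma Fpol_eqN i k : (forall l, is_edge G l -> bsum G l i = - bsum G l k) -> Fpol G i = Fpol G k.
Proof.
move=> h; rewrite !FpolE addrC; congr (_ + _); apply: eq_bigr => l El;
  by rewrite h ?posp_opp ?negp_opp.
Qed.

Lemma b00 : -2 <= (0 : int) <= 2. Proof. by []. Qed.

Lemma pt1_neq0 (S : idomainType) v (x : S) l : x != 0 -> pt1 v x l != 0.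
Proof. by rewrite /pt1; case: (l == v) => //; rewrite oner_neq0. Qed.
Lemma pt2_neq0 (S : idomainType) v u (x y : S) l : x != 0 -> y != 0 -> pt2 v u x y l != 0.
Proof. by rewrite /pt2; case: (l == v) => //; case: (l == u) => //; rewrite oner_neq0. Qed.

Lemma F2_one : (1 + 1 : 'F_2) = 0. Proof. apply/eqP; vm_compute; reflexivity. Qed.

Lemma zero_point k : exists (S : idomainType) (h : side T -> S),
  (forall l, h l != 0) /\ ev h (Fpol G k) = 0.
Proof.
case: (boolP [exists v, is_edge G v && (bsum G v k != 0)]).
  case/existsP => v /andP[Ev bv].
  have h1 : (0:int) != bsum G v k by rewrite eq_sym.
  have h2 : (0:int) != - bsum G v k by rewrite eq_sym oppr_eq0.
  have [x [x0 e _]] := fin1 (bsum_bound HG v k) b00 bv h1 h2.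
  exists FF, (pt1 v x); split; first by move=> l; exact: pt1_neq0.
  by rewrite evF1.
move/existsPn => h0; exists 'F_2, (fun _ => 1); split => [l|]; first exact: oner_neq0.
by rewrite evF !big1 ?F2_one // => l _; rewrite expr1n.
Qed.


Lemma no_div a k i : is_arc G k -> is_arc G i -> Fpol G i <> Fpol G k ->
  lp_divides G a k i -> a = 0%N.
Proof.
move=> Ak Ai nF ld; case: a ld => // a ld; exfalso.
have Ek : is_edge G k := proj1 (andP Ak).
have [S [h [hn F0]]] := zero_point k.
have ck := key_c Ek ld (ltn0Sn a) hn F0.
case: (boolP [exists v, is_edge G v && (bsum G v k != 0)]); last first.
  move/existsPn => b0.
  have b0' l : is_edge G l -> bsum G l k = 0.
    by move=> El; move: (b0 l); rewrite El /= => /negPn /eqP.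
  case: (boolP [exists v, is_edge G v && (bsum G v i != 0)]); last first.
    move/existsPn => c0; apply: nF; apply: Fpol_eq => l El.
    by move: (c0 l); rewrite El /= b0' // => /negPn /eqP.
  case/existsP => v /andP[Ev cv].
  have vk : k != v by apply: contraNneq cv => <-; rewrite ck.
  have hk : pt1 v (0 : 'F_2) k != 0 by rewrite /pt1 (negbTE vk) oner_neq0.
  have Fk0 : ev (pt1 v (0 : 'F_2)) (Fpol G k) = 0.
    by rewrite evF !prod_pt1 // b0' // !expr0 F2_one.
  have := key_F Ek ld (ltn0Sn a) hk Fk0 ck.
  rewrite evF !prod_pt1 //.
  have [z0|z0|z0] := ltrgtP (bsum G v i) 0; last by rewrite z0 eqxx in cv.
    have [-> ->] := pn_neg z0; rewrite expr0 expr0n absz_eq0 (negbTE cv) addr0.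
    by move/eqP; rewrite oner_eq0.
  have [-> ->] := pn_pos z0; rewrite expr0 expr0n absz_eq0 (negbTE cv) add0r.
  by move/eqP; rewrite oner_eq0.
case/existsP => v /andP[Ev bv].
have bdv := bsum_bound HG v k; have cdv := bsum_bound HG v i.
case: (boolP [exists u, is_edge G u && (bsum G v k * bsum G u i != bsum G u k * bsum G v i)]).
  case/existsP => u /andP[Eu mn].
  have uv : u != v by apply: contraNneq mn => ->; rewrite mulrC.
  have [x [y [x0 y0 e n]]] := fin2 bdv (bsum_bound HG u k) cdv (bsum_bound HG u i) bv mn.
  have := key_F Ek ld (ltn0Sn a) (pt2_neq0 v u k x0 y0) _ ck.
  by rewrite !evF2 // => /(_ e) /eqP; rewrite (negbTE n).
move/existsPn => mn.
have mn' u : is_edge G u -> bsum G v k * bsum G u i = bsum G u k * bsum G v i.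
  by move=> Eu; move: (mn u); rewrite Eu /= => /negPn /eqP.
have [e1|n1] := eqVneq (bsum G v i) (bsum G v k).
  apply: nF; apply: Fpol_eq => u Eu; apply: (mulfI bv).
  by rewrite mn' // e1 mulrC.
have [e2|n2] := eqVneq (bsum G v i) (- bsum G v k).
  apply: nF; apply: Fpol_eqN => u Eu; apply: (mulfI bv).
  by rewrite mn' // e2 mulrN mulrC -mulrN.
have [x [x0 e n]] := fin1 bdv cdv bv n1 n2.
have := key_F Ek ld (ltn0Sn a) (pt1_neq0 v k x0) _ ck.
by rewrite !evF1 // => /(_ e) /eqP; rewrite (negbTE n).
Qed.


Lemma NumF k j : is_edge G k -> bsum G k j = 0 -> Num G k j = Fpol G j.
Proof.
move=> Ek z; rewrite /Num [Fpol G j]FpolE !(bigD1 k Ek) /= z /=.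
by rewrite !expr0 ?mulr1 ?mul1r.
Qed.

Lemma lp_div0 k j : is_edge G k -> lp_divides G 0 k j.
Proof.
move=> Ek; exists `|bsum G k j|%N, (Num G k j).
by rewrite subst_formula // expr0 mul1r.
Qed.

Lemma Fpol_neq0 j : Fpol G j != 0.
Proof.
apply/eqP => /(congr1 (ev (fun _ => (1 : int)))).
have -> : ev (T:=T) (fun _ => (1 : int)) 0 = 0 by rewrite /ev rmorph0.
by rewrite evF !big1 // => l _; rewrite expr1n.
Qed.

Lemma lp_exp0 k i : is_arc G k -> is_arc G i -> Fpol G i <> Fpol G k -> lp_exp G k i = 0%N.
Proof.
move=> Ak Ai nF; rewrite /lp_exp.
set P := fun a => _ /\ _.
have ex : exists a, P a.
  exists 0%N; split; first exact: lp_div0 (proj1 (andP Ak)).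
  by move=> b hb; rewrite (no_div Ak Ai nF hb).
by have [hd _] := epsilon_spec (inhabits 0%N) P ex; exact: no_div Ak Ai nF hd.
Qed.

Lemma lp_exp_pos k i : is_arc G k -> is_arc G i -> i != k -> Fpol G i = Fpol G k ->
  (0 < lp_exp G k i)%N.
Proof.
move=> Ak Ai ik Fe.
have Ek : is_edge G k := proj1 (andP Ak).
have bkk := bsum_self HG Ak Ai ik.
have tr b : lp_divides G b k i = lp_divides G b k k by rewrite /lp_divides Fe.
have ld1 : lp_divides G 1 k k.
  exists 0%N, 1; rewrite (subst_formula _ Ek) (NumF Ek bkk) bkk.
  have -> : `|(0:int)|%N = 0%N by [].
  by rewrite expr1 mulr1 expr0.
have bnd b : lp_divides G b k k -> (b <= 1)%N.
  move=> /(lp_div_poly Ek) [N [H e]]; rewrite NumF // bkk /= expr0 mulr1 in e.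
  case: b e => [|[|b]] // e; exfalso.
  have e' : xv k ^+ N = Fpol G k ^+ b.+1 * H.
    apply: (mulfI (Fpol_neq0 k)); by rewrite e exprS -mulrA.
  have [S [h [hn F0]]] := zero_point k.
  move: e' => /(congr1 (ev h)); rewrite evXn evX evM evXn F0 expr0n /= mul0r => /eqP.
  by rewrite expf_eq0 (negbTE (hn k)) andbF.
rewrite /lp_exp; set P := fun a => _ /\ _.
have ex : exists a, P a.
  exists 1%N; split; first by rewrite tr.
  by move=> b; rewrite tr; exact: bnd.
have [_ hb] := epsilon_spec (inhabits 0%N) P ex.
by apply: hb; rewrite tr.
Qed.

End Main.

Theorem lemma4p12 (T : finType) (G : gluing T) (HG : is_triangulation G)
    (i : side T) (Hi : is_arc G i) :
  hatF G i = tofr (Fpol G i) <->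
  (forall j : side T, is_arc G j -> j != i -> Fpol G i <> Fpol G j).
Proof.
split.
  move=> H j Aj ji Fe.
  have ij : i != j by rewrite eq_sym.
  have pos := lp_exp_pos HG Aj Hi ij Fe.
  move: H; rewrite /hatF.
  set P := \prod_(k | _) _ => H.
  have tP : tofr P = 1.
    have F0 : tofr (Fpol G i) != 0 by apply: tofr_neq0; exact: Fpol_neq0.
    have : tofr (Fpol G i) * (tofr P)^-1 = tofr (Fpol G i) * 1 by rewrite mulr1.
    by move/(mulfI F0)/eqP; rewrite invr_eq1 => /eqP.
  have P1 : P = 1 by apply: tofr_inj; rewrite tP tofr1.
  move: P1 => /(congr1 (ev (pt1 j (2 : int)))); rewrite ev1 /P ev_prod.
  rewrite (bigD1 j) /=; last by rewrite Aj.
  rewrite big1 => [|k /andP[_ kj]]; last by rewrite evXn evX /pt1 (negbTE kj) expr1n.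
  rewrite mulr1 evXn evX /pt1 eqxx => /eqP.
have g1 : (1 : int) < 2 ^+ lp_exp G j i by rewrite exprn_egt1 // -lt0n.
by rewrite gt_eqF.
move=> H; rewrite /hatF big1 ?tofr1 ?divr1 // => k /andP[Ak ki].
by rewrite (lp_exp0 HG Ak Hi (H k Ak ki)).
Qed.
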